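(* Consider an instance of the Max-Buying-PL-Limited-$(\alpha,t)$ Problem (defined in the context). There is a non-negative integer $\ell$, whose value is bounded by a function that is linear in the length of the (binary) representation of the instance, such that there is an optimal solution in which the price of every item is at least $d_\ell$.
   Context: Items are $I=\{1,\dots,n\}$, bidders form a finite set $B$, $v=(v_{ib})$ is a non-negative integer valuation matrix and $C_i$ ($i\in I$) are non-negative integer capacities. For a rational $\alpha>1$, a positive integer $t$, and every integer $k\ge 0$, let $d_k=\max\{v_{ib}: i\in I,b\in B\}/\alpha^k$. The Max-Buying-PL-Limited-$(\alpha,t)$ Problem: choose prices $p_1\ge p_2\ge\dots\ge p_n$ with each $p_i\in\{d_0,d_1,\dots\}$, and an allocation, i.e. a set of item–bidder pairs $(i,b)$ (bidder $b$ receives a copy of $i$), such that each item $i$ is given to at most $C_i$ bidders, $p_i\le v_{ib}$ whenever $b$ receives $i$, and for every integer $r\ge 0$ each bidder receives at most one item whose price lies in $\{d_{rt},d_{rt+1},\dots,d_{(r+1)t-1}\}$ (a bidder may thus receive several items). The profit, to be maximized, is the sum over all allocated pairs $(i,b)$ of $p_i$. *)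

(* Defs.v *)
From HB Require Import structures.
From mathcomp Require Import all_boot all_order all_algebra.
Set Implicit Arguments. Unset Strict Implicit. Unset Printing Implicit Defensive.
Import Order.TTheory GRing.Theory Num.Theory.
Local Open Scope ring_scope.

Section MaxBuying.
Variables (n : nat) (B : finType) (v : 'I_n -> B -> nat) (C : 'I_n -> nat).
Variables (alpha : rat) (t : nat).

(* maximum valuation max_{i,b} v_{ib} (0 if there are no items/bidders) *)
Definition maxval : nat := (\max_(x : 'I_n * B) v x.1 x.2)%N.

Definition dprice (k : nat) : rat := (maxval%:R) / alpha ^+ k.

Definition in_block (r : nat) (x : rat) : bool :=
  [exists k : 'I_t, x == dprice (r * t + k)%N].

(* A solution: prices p : 'I_n -> rat and an allocation A (set of item-bidder
   pairs; (i,b) \in A means bidder b receives a copy of item i). *)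
Definition feasible (p : 'I_n -> rat) (A : {set 'I_n * B}) : Prop :=
  [/\ (forall i, exists k : nat, p i = dprice k),
      (forall i j : 'I_n, (i <= j)%N -> p j <= p i),
      (forall i, #|[set b | (i, b) \in A]| <= C i)%N,
      (forall i b, (i, b) \in A -> p i <= (v i b)%:R) &
      (forall (b : B) (r : nat),
         #|[set i | ((i, b) \in A) && in_block r (p i)]| <= 1)%N].

Definition profit (p : 'I_n -> rat) (A : {set 'I_n * B}) : rat :=
  \sum_(x in A) p x.1.

End MaxBuying.

Definition bitlen (m : nat) : nat := (trunc_log 2 m).+1.

(* Length of the binary representation of an instance (n, B, v, C);
   alpha and t are fixed parameters of the problem. *)
Definition inst_size (n : nat) (B : finType) (v : 'I_n -> B -> nat)
  (C : 'I_n -> nat) : nat :=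
  (bitlen n + bitlen #|B|
   + \sum_(i < n) (bitlen (C i) + \sum_(b : B) bitlen (v i b)))%N.

(* Main.v *)
Require Import Defs.
From HB Require Import structures.
From mathcomp Require Import all_boot all_order all_algebra.
From mathcomp Require Import zify.
From Stdlib Require Import Classical FunctionalExtensionality.
Set Implicit Arguments. Unset Strict Implicit. Unset Printing Implicit Defensive.
Import Order.TTheory GRing.Theory Num.Theory.
Local Open Scope ring_scope.

Lemma bernoulli (a : rat) (m : nat) : 1 <= a -> 1 + m%:R * (a - 1) <= a ^+ m.
Proof.
move=> a1; elim: m => [|m IH]; first by rewrite mul0r addr0 expr0.
rewrite exprSr -natr1 mulrDl mul1r.
have h1 : 1 + m%:R * (a - 1) + (a - 1) <= a ^+ m + (a - 1) by rewrite lerD2r.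
rewrite addrA; apply: (le_trans h1).
have h2 : 1 <= a ^+ m by rewrite exprn_ege1.
have : a ^+ m + (a - 1) <= a ^+ m * a.
  have -> : a ^+ m * a = a ^+ m + a ^+ m * (a - 1) by rewrite mulrBr mulr1 addrCA subrr addr0.
  rewrite lerD2l -{1}[a - 1]mul1r ler_wpM2r // subr_ge0 //.
by rewrite addrA.
Qed.

Lemma exists_m (a : rat) : 1 < a -> exists m : nat, 2 <= a ^+ m.
Proof.
move=> a1.
set x := (a - 1)^-1.
have x0 : 0 <= x by rewrite invr_ge0 subr_ge0 ltW.
exists (Num.Def.archi_bound x).
apply: le_trans (bernoulli _ (ltW a1)).
have h := archi_boundP x0.
have hp : 0 < a - 1 by rewrite subr_gt0.
have -> : (2:rat) = 1 + 1 by []. rewrite lerD2l.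
rewrite -ler_pdivrMr // div1r ltW //.
Qed.
Section Aux.
Variables (alpha : rat) (t : nat) (halpha : 1 < alpha) (ht : (0 < t)%N).
Variables (n : nat) (B : finType) (v : 'I_n -> B -> nat) (C : 'I_n -> nat).

Notation d := (dprice v alpha).

Lemma alpha_gt0 : 0 < alpha. Proof. exact: lt_trans ltr01 halpha. Qed.

Lemma dprice_ge0 k : 0 <= d k.
Proof. by rewrite /dprice divr_ge0 // exprn_ge0 // ltW // alpha_gt0. Qed.

Lemma dprice_gt0 k : (0 < maxval v)%N -> 0 < d k.
Proof. by move=> h; rewrite /dprice divr_gt0 ?ltr0n // exprn_gt0 // alpha_gt0. Qed.

Lemma dprice_ltn a b : (0 < maxval v)%N -> (a < b)%N -> d b < d a.
Proof.
move=> Mpos ab; rewrite /dprice ltr_pM2l ?ltr0n //.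
by rewrite ltf_pV2 ?ltr_eXn2l // ?posrE ?exprn_gt0 // alpha_gt0.
Qed.

Lemma dprice_leq a b : (a <= b)%N -> d b <= d a.
Proof.
move=> ab; rewrite /dprice; case: (posnP (maxval v)) => [->|Mpos].
  by rewrite !mul0r.
rewrite le_eqVlt; case: (ltngtP a b) ab => // [hab _|-> _].
  by rewrite dprice_ltn ?orbT.
by rewrite eqxx.
Qed.
End Aux.
Section Aux2.
Variables (alpha : rat) (t : nat) (halpha : 1 < alpha) (ht : (0 < t)%N).
Variables (n : nat) (B : finType) (v : 'I_n -> B -> nat) (C : 'I_n -> nat).
Hypothesis Mpos : (0 < maxval v)%N.

Notation d := (dprice v alpha).

Lemma dprice_inj a b : (d a == d b) = (a == b).
Proof.
case: (ltngtP a b) => [h|h|->]; last by rewrite eqxx.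
  by rewrite gt_eqF // dprice_ltn.
by rewrite lt_eqF // dprice_ltn.
Qed.

Lemma dprice_le a b : (d b <= d a) = (a <= b)%N.
Proof.
case: (leqP a b) => h; first by rewrite dprice_leq.
by apply/negbTE; rewrite -ltNge dprice_ltn.
Qed.

Lemma in_blockE r k : in_block v alpha t r (d k) = (k %/ t == r)%N.
Proof.
apply/existsP/eqP => [[k' /eqP]|<-].
  move/eqP; rewrite dprice_inj // => /eqP ->.
  by rewrite divnMDl // divn_small // addn0.
exists (Ordinal (div.ltn_pmod k ht)); apply/eqP; congr d => /=.
by rewrite -divn_eq.
Qed.
End Aux2.
Lemma sum_eq_le1 x a b : (\sum_(a <= q < b) (x == q) <= 1)%N.
Proof.
rewrite (eq_bigr (fun q => if q == x then 1 else 0)%N); last first.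
  by move=> q _; rewrite eq_sym; case: eqP.
rewrite -big_mkcond sum1_count /index_iota.
have -> : count (fun q => q == x) (iota a (b - a)) = count_mem x (iota a (b - a)) by [].
by rewrite count_uniq_mem ?iota_uniq //; case: (_ \in _).
Qed.

Lemma sum_eq_0 x a b : (b <= x)%N -> (\sum_(a <= q < b) (x == q) = 0)%N.
Proof.
move=> bx; rewrite big_nat big1 // => q /andP [_ qb].
by rewrite gtn_eqF //; apply: leq_trans qb bx.
Qed.
Section Compress.
Variables (alpha : rat) (t : nat) (halpha : 1 < alpha) (ht : (0 < t)%N).
Variables (n : nat) (B : finType) (v : 'I_n -> B -> nat) (C : 'I_n -> nat).
Hypothesis Mpos : (0 < maxval v)%N.
Variable R : nat.
Hypothesis hR : dprice v alpha R <= 1.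

Notation d := (dprice v alpha).

Lemma compress p A : feasible v C alpha t p A ->
  exists f : 'I_n -> nat, [/\ forall i, (f i < (R + n) * t)%N,
     feasible v C alpha t (fun i => d (f i)) A & forall i, p i <= d (f i)].
Proof.
move=> [Hex Hmono Hcap Hval Hblk].
have Hk' : forall i, exists k, p i == d k.
  by move=> i; have [k ->] := Hex i; exists k.
pose k i := ex_minn (Hk' i).
have Hk : forall i, p i = d (k i).
  by move=> i; rewrite /k; case: ex_minnP => m /eqP -> _.
pose blk i := (k i %/ t)%N.
pose off i := (k i %% t)%N.
pose used q := [exists i, blk i == q].
pose g q := if (q < R)%N then q else (R + \sum_(R <= q' < q) used q')%N.
have G1 : forall q, (g q <= q)%N.
  move=> q; rewrite /g; case: ltnP => // Rq.
  apply: (@leq_trans (R + \sum_(R <= q' < q) 1)%N).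
    by rewrite leq_add2l; apply: leq_sum => q' _; case: (used q').
  by rewrite sum_nat_const_nat muln1 subnKC.
have G0 : forall q, (R <= q)%N -> (R <= g q)%N.
  by move=> q Rq; rewrite /g ltnNge Rq /= leq_addr.
have G2 : forall r r', used r -> (r < r')%N -> (g r < g r')%N.
  move=> r r' ur rr'.
  case: (ltnP r' R) => [r'R|Rr'].
    by rewrite /g r'R (ltn_trans rr' r'R).
  case: (ltnP r R) => [rR|Rr].
    by rewrite /g rR; apply: (leq_trans rR); apply: G0.
  rewrite /g (ltnNge r R) (ltnNge r' R) Rr Rr' /= ltn_add2l.
  have rr'' := ltnW rr'.
  have -> : (\sum_(R <= q' < r') used q' = \sum_(R <= q' < r) used q' + \sum_(r <= q' < r') used q')%N.
    by apply: big_cat_nat.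
  rewrite (@big_ltn _ _ _ r) // ur.
  by rewrite addnA addn1 ltnS leq_addr.
have G3 : forall i, (g (blk i) < R + n)%N.
  move=> i; rewrite /g; case: (ltnP (blk i) R) => [bR|Rb]; first by apply: ltn_addr.
  rewrite ltn_add2l.
  apply: (@leq_trans (\sum_(j | j != i) 1).+1); last first.
    by rewrite sum1_card cardC1 card_ord; have := ltn_ord i; lia.
  rewrite ltnS.
  apply: (@leq_trans (\sum_(R <= q < blk i) \sum_(j | j != i) (blk j == q))).
    rewrite big_nat [X in (_ <= X)%N]big_nat.
    apply: leq_sum => q /andP [_ qb].
    case uq: (used q) => //.
    move/existsP: uq => [j /eqP bj].
    have ji : j != i by apply/eqP => eji; move: qb; rewrite -bj eji ltnn.
    by rewrite (bigD1 j) //= bj eqxx.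
  rewrite exchange_big /=.
  by apply: leq_sum => j _; apply: sum_eq_le1.
pose f i := (g (blk i) * t + off i)%N.
have Ek : forall i, k i = (blk i * t + off i)%N by move=> i; apply: divn_eq.
have F1 : forall i, (f i <= k i)%N.
  by move=> i; rewrite Ek /f leq_add2r leq_mul2r G1 orbT.
have Fdiv : forall i, (f i %/ t = g (blk i))%N.
  by move=> i; rewrite /f divnMDl // divn_small ?addn0 // div.ltn_pmod.
have Flt : forall i j, (blk i < blk j)%N -> (f i < f j)%N.
  move=> i j bij.
  have ui : used (blk i) by apply/existsP; exists i.
  have := G2 _ _ ui bij => gij.
  apply: (@leq_trans ((g (blk i)).+1 * t)%N).
    by rewrite /f mulSn [(t + _)%N]addnC ltn_add2l div.ltn_pmod.
  by apply: leq_trans (leq_addr _ _); rewrite leq_mul2r gij orbT.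
have Ginj : forall i j, g (blk i) = g (blk j) -> blk i = blk j.
  move=> i j e; case: (ltngtP (blk i) (blk j)) => // h.
    have ui : used (blk i) by apply/existsP; exists i.
    by move: (G2 _ _ ui h); rewrite e ltnn.
  have uj : used (blk j) by apply/existsP; exists j.
  by move: (G2 _ _ uj h); rewrite e ltnn.
exists f; split.
- move=> i; apply: (@leq_trans ((g (blk i)).+1 * t)%N).
    by rewrite /f mulSn [(t + _)%N]addnC ltn_add2l div.ltn_pmod.
  by rewrite leq_mul2r G3 orbT.
- split.
  + by move=> i; exists (f i).
  + move=> i j ij; apply: (dprice_leq halpha).
    have kij : (k i <= k j)%N by rewrite -(dprice_le halpha Mpos) -!Hk Hmono.
    have bij : (blk i <= blk j)%N by apply: leq_div2r.
    case: (ltngtP (blk i) (blk j)) => [h|h|e]; first by apply: ltnW; apply: Flt.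
      by move: bij; rewrite leqNgt h.
    rewrite /f e leq_add2l.
    by move: kij; rewrite (Ek i) (Ek j) e leq_add2l.
  + exact: Hcap.
  + move=> i b iA.
    have pv := Hval i b iA.
    case: (ltnP (blk i) R) => [bR|Rb].
      have -> : f i = k i by rewrite /f /g bR -Ek.
      by rewrite -Hk.
    have v1 : (1 <= v i b)%N.
      rewrite -(ltr0n rat); apply: lt_le_trans pv; rewrite Hk (dprice_gt0 halpha) //.
    apply: le_trans (_ : 1 <= _); last by rewrite ler1n.
    apply: le_trans hR; apply: (dprice_leq halpha).
    apply: leq_trans (G0 _ Rb) _.
    apply: (@leq_trans (g (blk i) * t)); first by rewrite leq_pmulr.
    exact: leq_addr.
  + move=> b r.
    case: (set_0Vmem [set i | ((i, b) \in A) && in_block v alpha t r (d (f i))]) => [->|[i0]].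
      by rewrite cards0.
    rewrite inE => /andP [_]; rewrite (in_blockE halpha ht Mpos) Fdiv => /eqP gi0.
    apply: leq_trans (Hblk b (blk i0)).
    apply: subset_leq_card; apply/subsetP => j; rewrite !inE.
    case/andP => jA; rewrite (in_blockE halpha ht Mpos) Fdiv => /eqP gj.
    rewrite jA Hk (in_blockE halpha ht Mpos) /=.
    by apply/eqP; apply: Ginj; rewrite gj gi0.
- by move=> i; rewrite Hk (dprice_leq halpha).
Qed.
End Compress.
Lemma finite_max (T : finType) (P : T -> Prop) (F : T -> rat) :
  (exists x, P x) -> exists x, P x /\ forall y, P y -> F y <= F x.
Proof.
move=> [x0 Px0].
suff H : forall s : seq T, (exists x, x \in s /\ P x) ->
    exists x, P x /\ forall y, y \in s -> P y -> F y <= F x.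
  have [x [Px Hx]] := H (enum T) (ex_intro _ x0 (conj (mem_enum _ x0) Px0)).
  by exists x; split => // y Py; apply: Hx => //; rewrite mem_enum.
elim => [|a s IH]; first by case=> x [].
move=> [x [xin Px]].
case: (classic (exists x, x \in s /\ P x)) => [H|H].
  have [m [Pm Hm]] := IH H.
  case: (classic (P a)) => Pa.
    case: (leP (F a) (F m)) => h.
      exists m; split => // y; rewrite inE => /orP [/eqP ->|ys] Py //.
      exact: Hm.
    exists a; split => // y; rewrite inE => /orP [/eqP ->|ys] Py //.
    by apply: le_trans (Hm _ ys Py) (ltW h).
  exists m; split => // y; rewrite inE => /orP [/eqP ->|ys] Py //.
  exact: Hm.
have xa : x = a.
  move: xin; rewrite inE => /orP [/eqP //|xs]; by case: H; exists x.
subst x; exists a; split => // y; rewrite inE => /orP [/eqP ->|ys] Py //.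
by case: H; exists y.
Qed.

Lemma leq_bigsum (I : finType) (F : I -> nat) j : (F j <= \sum_i F i)%N.
Proof. by rewrite (bigD1 j) //= leq_addr. Qed.

Unset Implicit Arguments.
Theorem lemma13 (alpha : rat) (t : nat) (halpha : 1 < alpha) (ht : (0 < t)%N) :
  exists c1 c2 : nat,
  forall (n : nat) (B : finType) (v : 'I_n -> B -> nat) (C : 'I_n -> nat),
  exists l : nat,
    (l <= c1 * inst_size v C + c2)%N /\
    exists (p : 'I_n -> rat) (A : {set 'I_n * B}),
      [/\ feasible v C alpha t p A,
          (forall i, dprice v alpha l <= p i) &
          (forall (p' : 'I_n -> rat) (A' : {set 'I_n * B}),
             feasible v C alpha t p' A' -> profit p' A' <= profit p A)].
Proof.
have [m hm] := exists_m halpha.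
exists (m.+1 * t)%N, 0%N => n B v C.
set s := inst_size v C.
have ns : (n <= s)%N.
  rewrite /s /inst_size.
  apply: leq_trans (leq_addl _ _).
  apply: (@leq_trans (\sum_(i < n) 1)%N); first by rewrite sum_nat_const card_ord muln1.
  by apply: leq_sum => i _; apply: leq_trans (leq_addr _ _).
have bs : forall i b, (bitlen (v i b) <= s)%N.
  move=> i b; rewrite /s /inst_size.
  apply: leq_trans (leq_addl _ _).
  apply: leq_trans (leq_bigsum _ i).
  apply: leq_trans (leq_addl _ _).
  exact: leq_bigsum.
case: (posnP (maxval v)) => [M0|Mpos].
  have d0 : forall k, dprice v alpha k = 0 by move=> k; rewrite /dprice M0 mul0r.
  exists 0%N; split; first by [].
  exists (fun _ => 0), set0; split.
  - split.
    + by move=> i; exists 0%N; rewrite d0.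
    + by [].
    + move=> i; rewrite (_ : [set b | (i, b) \in set0] = set0) ?cards0 //.
      by apply/setP => b; rewrite !inE.
    + by move=> i b; rewrite inE.
    + move=> b r; rewrite (_ : [set i | _] = set0) ?cards0 //.
      by apply/setP => i; rewrite !inE.
  - by move=> i; rewrite d0.
  - move=> p' A' [Hex _ _ _ _]; rewrite /profit big1 ?big1 // => x _.
    by have [k ->] := Hex x.1; rewrite d0.
pose R := (m * s)%N.
have hR : dprice v alpha R <= 1.
  rewrite /dprice ler_pdivrMr ?exprn_gt0 ?alpha_gt0 // mul1r.
  apply: (@le_trans _ _ ((2 ^ s)%N)%:R).
    rewrite ler_nat; apply/bigmax_leqP => x _.
    apply: ltnW; apply: leq_trans (@trunc_log_ltn 2 (v x.1 x.2) erefl) _.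
    by rewrite leq_exp2l //; apply: bs.
  rewrite natrX /R exprM; apply: lerXn2r => //.
  by rewrite nnegrE exprn_ge0 // ltW // alpha_gt0.
pose L := ((R + n) * t)%N.
exists L; split.
  rewrite addn0 /L /R.
  have : (m * s + n <= m.+1 * s)%N by rewrite mulSn addnC leq_add2r.
  move=> h; rewrite mulnAC; by rewrite leq_mul2r h orbT.
pose T := ({ffun 'I_n -> 'I_L.+1} * {set 'I_n * B})%type.
pose P (x : T) := feasible v C alpha t (fun i => dprice v alpha (x.1 i)) x.2.
pose F (x : T) := profit (fun i => dprice v alpha (x.1 i)) x.2.
have Pne : exists x, P x.
  exists ([ffun _ => ord0], set0); rewrite /P /=; split.
  + by move=> i; exists (([ffun _ => ord0] : {ffun 'I_n -> 'I_L.+1}) i).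
  + by move=> i j _; rewrite !ffunE.
  + move=> i; rewrite (_ : [set b | (i, b) \in set0] = set0) ?cards0 //.
    by apply/setP => b; rewrite !inE.
  + by move=> i b; rewrite inE.
  + move=> b r; rewrite (_ : [set i | _] = set0) ?cards0 //.
    by apply/setP => i; rewrite !inE.
have [[fm Am] [Pm Hm]] := finite_max F Pne.
exists (fun i => dprice v alpha (fm i)), Am; split => //.
  by move=> i; apply: (dprice_leq halpha); apply: leq_ord.
move=> p' A' feas.
have [f [Hf Hfe Hfp]] := compress halpha ht Mpos hR feas.
pose ff : {ffun 'I_n -> 'I_L.+1} := [ffun i => Ordinal (leqW (Hf i))].
have E : (fun i => dprice v alpha (ff i)) = (fun i => dprice v alpha (f i)).
  by apply: functional_extensionality => i; rewrite ffunE.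
have Pff : P (ff, A') by rewrite /P /= E.
apply: le_trans (Hm _ Pff).
rewrite /F /= E /profit; apply: ler_sum => x _; exact: Hfp.
Qed.
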